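(* If $n\ge2$ and $q$ is a nonnegative integer with $q<\frac{n}{\log(n+1)+1}-1$, then $(1-1/e)(q+1)^n\le A(n,q)\le(q+1)^n$.
   Context: $A(n,q)$ is the Eulerian number, the number of permutations of $\{1,\dots,n\}$ with exactly $q$ ascents, with $A(n,q)=0$ if $q\ge n$; $\log$ is the natural logarithm. *)

(* Defs.v *)
From mathcomp Require Import all_boot all_fingroup.
From Stdlib Require Import Reals.

Set Implicit Arguments. Unset Strict Implicit. Unset Printing Implicit Defensive.

(* Number of ascents of a permutation s of {0,...,n-1} (standing for {1,...,n}):
   positions i with i+1 < n and s(i) < s(i+1),
   encoded as the pairs (i, i+1) of indices in 'I_n. *)
Definition ascents (n : nat) (s : 'S_n) : nat :=
  #|[set ij : 'I_n * 'I_n | (ij.2 == ij.1.+1 :> nat) && (s ij.1 < s ij.2)]|.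

Definition eulerian (n q : nat) : nat :=
  #|[set s : 'S_n | ascents s == q]|.

(* Main.v *)
Require Import Defs.
From mathcomp Require Import all_boot all_fingroup.
From mathcomp Require Import zify.
Set Implicit Arguments. Unset Strict Implicit. Unset Printing Implicit Defensive.

Definition ltf {n q : nat} (f : {ffun 'I_n -> 'I_q.+1}) (v w : 'I_n) : bool :=
  (f v < f w) || ((nat_of_ord (f v) == nat_of_ord (f w)) && (w < v)).

Lemma ltf_irr n q (f : {ffun 'I_n -> 'I_q.+1}) v : ltf f v v = false.
Proof. rewrite /ltf; lia. Qed.

Lemma ltf_asym n q (f : {ffun 'I_n -> 'I_q.+1}) v w : ltf f v w -> ltf f w v = false.
Proof. rewrite /ltf; lia. Qed.

Lemma ltf_trans n q (f : {ffun 'I_n -> 'I_q.+1}) u v w : ltf f u v -> ltf f v w -> ltf f u w.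
Proof. rewrite /ltf; lia. Qed.

Lemma ltf_total n q (f : {ffun 'I_n -> 'I_q.+1}) v w : v != w -> ltf f v w || ltf f w v.
Proof. move=> ne; have : nat_of_ord v != nat_of_ord w by []. rewrite /ltf; lia. Qed.

Definition rk {n q : nat} (f : {ffun 'I_n -> 'I_q.+1}) (v : 'I_n) : nat :=
  #|[set w | ltf f w v]|.

Lemma rk_ltf n q (f : {ffun 'I_n -> 'I_q.+1}) v w : ltf f v w -> rk f v < rk f w.
Proof.
move=> H; apply: proper_card; apply/properP; split.
  apply/subsetP => u; rewrite !inE => Hu; exact: ltf_trans Hu H.
by exists v; rewrite !inE ?ltf_irr.
Qed.

Lemma rk_ltE n q (f : {ffun 'I_n -> 'I_q.+1}) v w : (rk f v < rk f w) = ltf f v w.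
Proof.
apply/idP/idP; last exact: rk_ltf.
move=> H; case: (eqVneq v w) => [E|ne]; first by move: H; rewrite E ltnn.
move: (ltf_total f ne) => /orP [//|/rk_ltf H']; lia.
Qed.

Lemma rk_inj n q (f : {ffun 'I_n -> 'I_q.+1}) : injective (rk f).
Proof.
move=> v w E; apply/eqP; apply/negPn/negP => ne.
move: (ltf_total f ne) => /orP [] /rk_ltf; lia.
Qed.

Lemma rk_bound n q (f : {ffun 'I_n -> 'I_q.+1}) v : rk f v < n.
Proof.
rewrite -[n in _ < n]card_ord -cardsT; apply: proper_card; apply/properP; split.
  exact: subsetT.
by exists v; rewrite !inE ?ltf_irr.
Qed.

Definition rko {n q : nat} (f : {ffun 'I_n -> 'I_q.+1}) (v : 'I_n) : 'I_n :=
  Ordinal (rk_bound f v).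

Lemma rko_inj n q (f : {ffun 'I_n -> 'I_q.+1}) : injective (rko f).
Proof. by move=> v w /(congr1 val) /= /rk_inj. Qed.

Definition sig {n q : nat} (f : {ffun 'I_n -> 'I_q.+1}) : 'S_n := (perm (@rko_inj n q f))^-1.

Lemma rk_sig n q (f : {ffun 'I_n -> 'I_q.+1}) p : rk f (sig f p) = p.
Proof.
have := congr1 val (permKV (perm (@rko_inj n q f)) p).
by rewrite /sig permE.
Qed.

Lemma sig_rk n q (f : {ffun 'I_n -> 'I_q.+1}) v : sig f (rko f v) = v.
Proof. by rewrite /sig -(permE (@rko_inj n q f)) permK. Qed.

Lemma rk_le_f n q (f : {ffun 'I_n -> 'I_q.+1}) v w : rk f v <= rk f w -> f v <= f w.
Proof.
rewrite leq_eqVlt => /orP [/eqP /rk_inj -> //|]; rewrite rk_ltE /ltf; lia.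
Qed.

Definition asc {n : nat} (s : 'S_n.+1) (i : nat) : bool :=
  (i < n) && (s (inord i) < s (inord i.+1)).
Definition AB {n : nat} (s : 'S_n.+1) (p : nat) : nat := \sum_(0 <= i < p) asc s i.

Lemma card_pred_sum (T : finType) (P : pred T) : #|[set x | P x]| = \sum_x P x.
Proof.
rewrite -sum1_card big_mkcond /=; apply: eq_bigr => x _; rewrite inE; by case: (P x).
Qed.

Lemma ascentsE n (s : 'S_n.+1) : ascents s = AB s n.
Proof.
rewrite /ascents.
have -> : [set ij : 'I_n.+1 * 'I_n.+1 | (ij.2 == ij.1.+1 :> nat) && (s ij.1 < s ij.2)]
   = (fun i : 'I_n.+1 => (i, (inord (nat_of_ord i).+1 : 'I_n.+1))) @: [set i : 'I_n.+1 | asc s i].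
  apply/setP => [[i j]]; rewrite inE /=; apply/idP/imsetP.
    move=> /andP [/eqP Hj Hs]; exists i.
      rewrite inE /asc inord_val; have Hi : i < n by move: (ltn_ord j); lia.
      rewrite Hi /=. have -> : (inord i.+1 : 'I_n.+1) = j by apply: val_inj; rewrite /= inordK; lia.
      done.
    have -> : (inord i.+1 : 'I_n.+1) = j by apply: val_inj; rewrite /= inordK; move: (ltn_ord j); lia.
    done.
  move=> [x]; rewrite inE /asc => /andP [Hx Hs] [-> ->] /=.
  rewrite inordK; last lia. by rewrite eqxx /= -{1}(inord_val x).
rewrite card_in_imset; last by move=> x y _ _ [].
rewrite card_pred_sum /AB -(big_mkord xpredT (fun i => (asc s i : nat))) big_nat_recr //=.
by rewrite /asc ltnn addn0.
Qed.

Lemma AB_S n (s : 'S_n.+1) p : AB s p.+1 = AB s p + asc s p.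
Proof. by rewrite /AB big_nat_recr. Qed.

Lemma AB_mono n (s : 'S_n.+1) p p' : p <= p' -> AB s p <= AB s p'.
Proof.
move=> H; rewrite -(subnKC H); elim: (p' - p) => [|d IH]; first by rewrite addn0.
by rewrite addnS AB_S; lia.
Qed.

Lemma AB_ge n (s : 'S_n.+1) p : n <= p -> AB s p = AB s n.
Proof.
move=> H; rewrite -(subnKC H); elim: (p - n) => [|d IH]; first by rewrite addn0.
by rewrite addnS AB_S IH /asc ltnNge leq_addr /= addn0.
Qed.

Lemma AB_order n (s : 'S_n.+1) i d : i + d <= n ->
  AB s i <= AB s (i + d) /\ (AB s i = AB s (i + d) -> s (inord (i + d)) <= s (inord i)).
Proof.
elim: d => [|d IH] H; first by rewrite addn0.
have H' : i + d <= n by rewrite addnS in H; apply: ltnW.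
have [H1 H2] := IH H'.
rewrite addnS AB_S /asc.
have -> : (i + d < n) = true by rewrite addnS in H.
case: (ltnP (s (inord (i + d))) (s (inord (i + d).+1))) => Hc /=; lia.
Qed.

Definition fs {n : nat} (q : nat) (s : 'S_n.+1) : {ffun 'I_n.+1 -> 'I_q.+1} :=
  [ffun v => inord (AB s ((s^-1)%g v))].

Lemma fs_val n q (s : 'S_n.+1) v : ascents s = q -> nat_of_ord (fs q s v) = AB s ((s^-1)%g v).
Proof.
move=> Hq; rewrite ffunE inordK // ltnS -Hq ascentsE; apply: AB_mono.
by have := ltn_ord ((s^-1)%g v); lia.
Qed.

Lemma fs_ltf n q (s : 'S_n.+1) (p p' : 'I_n.+1) : ascents s = q -> p < p' ->
  ltf (fs q s) (s p) (s p').
Proof.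
move=> Hq Hp; rewrite /ltf !fs_val // !permK.
have Hd : p + (p' - p) <= n by have := ltn_ord p'; lia.
have [H1 H2] := AB_order s Hd.
have E : p + (p' - p) = p' by lia.
rewrite E in H1 H2; rewrite !inord_val in H2.
have ne : s p' != s p by rewrite (inj_eq perm_inj) -val_eqE /=; lia.
have : (nat_of_ord (s p') != nat_of_ord (s p)) by [].
lia.
Qed.

Lemma card_lt_ord N k : k <= N -> #|[set p : 'I_N | p < k]| = k.
Proof.
move=> Hk; rewrite card_pred_sum -(big_mkord xpredT (fun i => (i < k : nat))).
rewrite (@big_cat_nat _ _ _ k 0 N) //=.
rewrite [X in _ + X]big_nat_cond [X in _ + X]big1; last by move=> i /andP [/andP [H _] _]; rewrite ltnNge H.
rewrite big_nat_cond (eq_bigr (fun _ => 1)); last by move=> i /andP [/andP [_ ->] _].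
by rewrite -big_nat_cond sum_nat_const_nat muln1 subn0 addn0.
Qed.

Lemma rk_fs n q (s : 'S_n.+1) v : ascents s = q -> rk (fs q s) v = (s^-1)%g v.
Proof.
move=> Hq; rewrite /rk.
have -> : [set w | ltf (fs q s) w v] = (s^-1)%g @^-1: [set p : 'I_n.+1 | p < (s^-1)%g v].
  apply/setP => w; rewrite !inE; apply/idP/idP.
    move=> H; rewrite ltnNge; apply/negP; rewrite leq_eqVlt => /orP [/eqP E|E].
      by move: H; rewrite (perm_inj (val_inj E)) ltf_irr.
    by move: (fs_ltf Hq E); rewrite !permKV (ltf_asym H).
  by move=> /(fs_ltf Hq); rewrite !permKV.
by rewrite card_preimset ?card_lt_ord //; [apply: ltnW; apply: ltn_ord | apply: perm_inj].
Qed.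

Lemma upper n q : eulerian n.+1 q <= q.+1 ^ n.+1.
Proof.
rewrite /eulerian -(card_in_imset (f := fs q)).
  apply: leq_trans (max_card _) _; by rewrite card_ffun !card_ord.
move=> s1 s2; rewrite !inE => /eqP H1 /eqP H2 E.
apply: invg_inj; apply/permP => v; apply: val_inj.
by rewrite /= -(rk_fs v H1) -(rk_fs v H2) E.
Qed.

Definition excess {n q : nat} (f : {ffun 'I_n -> 'I_q.+1}) (j : nat) : bool :=
  [&& [forall v, (j <= rk f v) ==> (0 < f v)],
      [forall v, (rk f v < j) ==> (f v < q)] &
      [forall v, forall w, ((rk f v < j) && (j <= rk f w)) ==> (f v + 1 + (v < w) <= f w)]].

Definition phi {n q : nat} (j : nat) (f : {ffun 'I_n -> 'I_q.+1}) : {ffun 'I_n -> 'I_q.+1} :=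
  [ffun v => inord (f v - (j <= rk f v))].

Lemma phi_val n q j (f : {ffun 'I_n -> 'I_q.+1}) v :
  nat_of_ord (phi j f v) = f v - (j <= rk f v).
Proof. rewrite ffunE inordK //; have := ltn_ord (f v); lia. Qed.

Lemma phi_ltf n q j (f : {ffun 'I_n -> 'I_q.+1}) a b : excess f j ->
  ltf (phi j f) a b = ltf f a b.
Proof.
move=> /and3P [/forallP C1 /forallP C2 /forallP C3].
case: (eqVneq a b) => [->|ne]; first by rewrite !ltf_irr.
have ne' : nat_of_ord a != nat_of_ord b := ne.
rewrite /ltf !phi_val.
case: (leqP j (rk f a)) => Ha; case: (leqP j (rk f b)) => Hb /=.
- have := implyP (C1 a) Ha; have := implyP (C1 b) Hb; lia.
- have := implyP (forallP (C3 b) a); rewrite Ha Hb => /(_ isT).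
  case: (ltnP b a) => Hab; lia.
- have := implyP (forallP (C3 a) b); rewrite Ha Hb => /(_ isT).
  case: (ltnP a b) => Hab; lia.
- lia.
Qed.

Lemma phi_rk n q j (f : {ffun 'I_n -> 'I_q.+1}) v : excess f j -> rk (phi j f) v = rk f v.
Proof.
move=> H; rewrite /rk; apply: eq_card => w; by rewrite !inE phi_ltf.
Qed.

Lemma phi_lt_q n q j (f : {ffun 'I_n -> 'I_q.+1}) v : excess f j -> phi j f v < q.
Proof.
move=> /and3P [/forallP C1 /forallP C2 _]; rewrite phi_val.
have := ltn_ord (f v).
case: (leqP j (rk f v)) => Hv.
- have := implyP (C1 v) Hv; lia.
- have := implyP (C2 v) Hv; lia.
Qed.

Lemma card_excess n q j : #|[set f : {ffun 'I_n -> 'I_q.+1} | excess f j]| <= q ^ n.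
Proof.
rewrite -(card_in_imset (f := phi j)).
  have Hs : phi j @: [set f : {ffun 'I_n -> 'I_q.+1} | excess f j]
        \subset ffun_on [set i : 'I_q.+1 | i < q].
    apply/subsetP => g /imsetP [f]; rewrite inE => Hf ->.
    apply/ffun_onP => v; rewrite inE; exact: phi_lt_q.
  apply: leq_trans (subset_leq_card Hs) _.
  by rewrite card_ffun_on card_lt_ord // card_ord.
move=> f1 f2; rewrite !inE => H1 H2 E.
apply/ffunP => v; apply: val_inj.
have Hr : rk f1 v = rk f2 v by rewrite -(phi_rk v H1) -(phi_rk v H2) E.
have := congr1 (fun g : {ffun 'I_n -> 'I_q.+1} => nat_of_ord (g v)) E.
rewrite /= !phi_val Hr.
move: H1 H2 => /and3P [/forallP C1 _ _] /and3P [/forallP D1 _ _].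
have := implyP (C1 v); have := implyP (D1 v); rewrite Hr.
case: (j <= rk f2 v) => /=; first last.
  by rewrite !subn0 => _ _.
move=> /(_ isT) h1 /(_ isT) h2; lia.
Qed.

Lemma rk_le_cases n q (f : {ffun 'I_n -> 'I_q.+1}) v w : rk f v <= rk f w ->
  (f v < f w) || ((nat_of_ord (f v) == nat_of_ord (f w)) && (w <= v)).
Proof.
rewrite leq_eqVlt => /orP [/eqP /rk_inj ->|]; first by rewrite eqxx leqnn orbT.
rewrite rk_ltE /ltf; lia.
Qed.

Section Tight.
End Tight.

Lemma rk_sig_inord n q (f : {ffun 'I_n.+1 -> 'I_q.+1}) p : p <= n ->
  rk f (sig f (inord p)) = p.
Proof. by move=> Hp; rewrite rk_sig inordK. Qed.

Lemma tight_step n q (f : {ffun 'I_n.+1 -> 'I_q.+1}) p : p < n -> ~~ excess f p.+1 ->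
  nat_of_ord (f (sig f (inord p.+1))) = f (sig f (inord p)) + asc (sig f) p.
Proof.
move=> Hp Hn.
set a := sig f (inord p); set b := sig f (inord p.+1).
have Ra : rk f a = p by apply: rk_sig_inord; lia.
have Rb : rk f b = p.+1 by apply: rk_sig_inord; lia.
have Lab : ltf f a b by rewrite -rk_ltE Ra Rb.
have Hasc : asc (sig f) p = (a < b) by rewrite /asc Hp.
have ne : nat_of_ord a != nat_of_ord b by apply/negP => /eqP /val_inj E; move: Lab; rewrite E ltf_irr.
have Hqb := ltn_ord (f b).
apply/eqP; rewrite eqn_leq; apply/andP; split; last first.
  rewrite Hasc; move: Lab; rewrite /ltf; case: (ltnP a b) => ?; lia.
rewrite leqNgt; apply/negP => Hgt; move/negP: Hn; apply.
apply/and3P; split.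
- apply/forallP => v; apply/implyP => Hv.
  have := rk_le_cases (v := b) (w := v) (f := f); rewrite Rb => /(_ Hv); lia.
- apply/forallP => v; apply/implyP => Hv.
  have := rk_le_cases (v := v) (w := a) (f := f); rewrite Ra => /(_ (ltac:(lia))); lia.
- apply/forallP => v; apply/forallP => w; apply/implyP => /andP [Hv Hw].
  have := rk_le_cases (v := v) (w := a) (f := f); rewrite Ra => /(_ (ltac:(lia))).
  have := rk_le_cases (v := b) (w := w) (f := f); rewrite Rb => /(_ Hw).
  rewrite Hasc in Hgt; move: Lab; rewrite /ltf.
  case: (ltnP a b) => ?; case: (ltnP v w) => ?; lia.
Qed.

Lemma tight_base n q (f : {ffun 'I_n.+1 -> 'I_q.+1}) : ~~ excess f 0 ->
  nat_of_ord (f (sig f (inord 0))) = 0.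
Proof.
move=> Hn; apply/eqP; rewrite -leqn0 leqNgt; apply/negP => Hgt; move/negP: Hn; apply.
have Ra : rk f (sig f (inord 0)) = 0 by apply: rk_sig_inord.
apply/and3P; split.
- apply/forallP => v; apply/implyP => _.
  have := rk_le_cases (v := sig f (inord 0)) (w := v) (f := f); rewrite Ra => /(_ isT); lia.
- by apply/forallP => v.
- by apply/forallP => v; apply/forallP => w.
Qed.

Lemma tight_top n q (f : {ffun 'I_n.+1 -> 'I_q.+1}) : ~~ excess f n.+1 ->
  q <= f (sig f (inord n)).
Proof.
move=> Hn; rewrite leqNgt; apply/negP => Hgt; move/negP: Hn; apply.
have Ra : rk f (sig f (inord n)) = n by apply: rk_sig_inord.
apply/and3P; split.
- apply/forallP => v; apply/implyP => Hv; have := rk_bound f v; lia.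
- apply/forallP => v; apply/implyP => Hv.
  have := rk_le_cases (v := v) (w := sig f (inord n)) (f := f); rewrite Ra => /(_ (ltac:(lia))); lia.
- apply/forallP => v; apply/forallP => w; apply/implyP => /andP [_ Hw].
  have := rk_bound f w; lia.
Qed.

Definition tight {n q : nat} (f : {ffun 'I_n.+1 -> 'I_q.+1}) : bool :=
  [forall j : 'I_n.+2, ~~ excess f j].

Lemma tight_fs n q (f : {ffun 'I_n.+1 -> 'I_q.+1}) : tight f ->
  ascents (sig f) = q /\ f = fs q (sig f).
Proof.
move=> /forallP T.
have T' : forall j, j <= n.+1 -> ~~ excess f j.
  by move=> j Hj; have := T (inord j); rewrite inordK.
have G : forall p, p <= n -> nat_of_ord (f (sig f (inord p))) = AB (sig f) p.
  elim => [_|p IH Hp]; first by rewrite tight_base ?T' // /AB big_geq.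
  rewrite tight_step ?T' //; last lia.
  by rewrite IH ?AB_S //; lia.
have Hq : ascents (sig f) = q.
  rewrite ascentsE -G //; apply/eqP; rewrite eqn_leq -ltnS ltn_ord.
  exact: tight_top (T' _ (leqnn _)).
split => //; apply/ffunP => v; apply: val_inj.
rewrite /= fs_val // /sig invgK permE.
have Hr := rk_bound f v.
rewrite -G; last by move: Hr; rewrite ltnS.
have -> : (inord (rko f v) : 'I_n.+1) = rko f v by rewrite inord_val.
by rewrite sig_rk.
Qed.

Lemma lower n q : q.+1 ^ n.+1 <= eulerian n.+1 q + n.+2 * q ^ n.+1.
Proof.
have -> : q.+1 ^ n.+1 = \sum_(f : {ffun 'I_n.+1 -> 'I_q.+1}) 1.
  by rewrite sum1_card card_ffun !card_ord.
apply: (@leq_trans (\sum_(f : {ffun 'I_n.+1 -> 'I_q.+1})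
                      (tight f + \sum_(j < n.+2) excess f j))).
  apply: leq_sum => f _; case Ht: (tight f); first by rewrite add1n.
  move/negbT: Ht => /forallPn [j /negPn Hj].
  by rewrite (bigD1 j) //= Hj.
rewrite big_split /= leq_add //.
  rewrite -card_pred_sum /eulerian.
  apply: leq_trans (leq_imset_card (fs q) _).
  apply: subset_leq_card; apply/subsetP => f; rewrite inE => /tight_fs [H1 H2].
  by apply/imsetP; exists (sig f); rewrite ?inE ?H1.
rewrite exchange_big /=.
apply: (@leq_trans (\sum_(j < n.+2) q ^ n.+1)).
  apply: leq_sum => j _; rewrite -card_pred_sum; apply: card_excess.
by rewrite sum_nat_const card_ord.
Qed.
Unset Implicit Arguments.
From Stdlib Require Import Reals Lra.

Lemma INR_addn a b : INR (a + b) = (INR a + INR b)%R.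
Proof. exact: plus_INR. Qed.
Lemma INR_muln a b : INR (a * b) = (INR a * INR b)%R.
Proof. exact: mult_INR. Qed.
Lemma INR_expn a b : INR (expn a b) = (INR a ^ b)%R.
Proof. elim: b => [|b IH]; first by rewrite expn0. by rewrite expnS INR_muln IH. Qed.
Lemma exp_pow_nat (y : R) k : (exp y ^ k = exp (INR k * y))%R.
Proof.
elim: k => [|k IH]; first by rewrite /= Rmult_0_l exp_0.
rewrite S_INR -tech_pow_Rmult IH -exp_plus; f_equal; ring.
Qed.

Lemma real_part (N : nat) (x Q nn E : R) :
  (0 < x)%R -> Q = (x - 1)%R -> (0 <= Q)%R -> nn = INR N -> (1 <= nn)%R ->
  (Q < nn / (ln (nn + 1) + 1) - 1)%R ->
  (x ^ N <= E + (nn + 1) * Q ^ N)%R ->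
  ((1 - 1 / exp 1) * x ^ N <= E)%R.
Proof.
move=> Hx HQ HQ0 Hnn Hn1 Hq HL.
have HL0 : (0 < ln (nn + 1))%R.
  rewrite -ln_1; apply: ln_increasing; lra.
have H1 : (Q <= x * exp (- (1 / x)))%R.
  have := exp_ineq1_le (- (1 / x)).
  move=> h; rewrite HQ.
  have : (x * (1 + - (1 / x)) <= x * exp (- (1 / x)))%R by apply: Rmult_le_compat_l; lra.
  have -> : (x * (1 + - (1 / x)) = x - 1)%R by field; lra.
  done.
have H2 : (Q ^ N <= x ^ N * exp (INR N * (- (1 / x))))%R.
  rewrite -exp_pow_nat -Rpow_mult_distr; apply: pow_incr; lra.
have H3 : (INR N * (- (1 / x)) < - (ln (nn + 1) + 1))%R.
  rewrite -Hnn.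
  have Hx' : (x * (ln (nn + 1) + 1) < nn)%R.
    have : (x < nn / (ln (nn + 1) + 1))%R by lra.
    move=> h; have := Rmult_lt_compat_r (ln (nn + 1) + 1) _ _ ltac:(lra) h.
    by rewrite /Rdiv Rmult_assoc Rinv_l ?Rmult_1_r; lra.
  have -> : (nn * - (1 / x) = - (nn / x))%R by field; lra.
  apply: Ropp_lt_contravar.
  apply: (Rmult_lt_reg_r x); first lra.
  rewrite /Rdiv Rmult_assoc Rinv_l; lra.
have H4 : (exp (INR N * (- (1 / x))) < / (nn + 1) * / exp 1)%R.
  have -> : (/ (nn + 1) * / exp 1 = exp (- (ln (nn + 1) + 1)))%R.
    rewrite Ropp_plus_distr exp_plus !exp_Ropp exp_ln //; lra.
  by apply: exp_increasing.
have Hxn : (0 < x ^ N)%R by apply: pow_lt.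
have He : (0 < exp 1)%R by apply: exp_pos.
have H5 : ((nn + 1) * Q ^ N <= x ^ N / exp 1)%R.
  apply: (Rle_trans _ ((nn + 1) * (x ^ N * exp (INR N * - (1 / x))))).
    apply: Rmult_le_compat_l; lra.
  apply: (Rle_trans _ ((nn + 1) * (x ^ N * (/ (nn + 1) * / exp 1)))).
    apply: Rmult_le_compat_l; first lra.
    apply: Rmult_le_compat_l; lra.
  right; field; lra.
have -> : ((1 - 1 / exp 1) * x ^ N = x ^ N - x ^ N / exp 1)%R by field; lra.
lra.
Qed.

Theorem mainTheorem19 (n q : nat) :
  (2 <= n)%N ->
  (INR q < INR n / (ln (INR n + 1) + 1) - 1)%R ->
  ((1 - 1 / exp 1) * INR (q + 1) ^ n <= INR (eulerian n q))%R /\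
  (INR (eulerian n q) <= INR (q + 1) ^ n)%R.
Proof.
case: n => [//|m] Hn Hq.
have U := upper m q; have L := lower m q.
rewrite addn1; split.
  apply: (@real_part m.+1 (INR q.+1) (INR q) (INR m.+1)) => //.
  - exact: lt_0_INR (Nat.lt_0_succ q).
  - by rewrite S_INR; ring.
  - exact: pos_INR.
  - have : (1 <= m.+1)%coq_nat by apply/leP.
    by move/le_INR.
  - have := le_INR _ _ (elimT leP L).
    by rewrite INR_addn INR_muln !INR_expn (S_INR m.+1).
have := le_INR _ _ (elimT leP U).
by rewrite INR_expn.
Qed.
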